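(* Let $n\ge 1$, $\tau>0$, and $\mathbf{s}=[s_1,\dots,s_n]^T\in\mathbb{R}^n$. Let $A_{\mathbf{s}}[i,j]=|s_i-s_j|$ and let $\mathbb{1}$ be the all-ones vector in $\mathbb{R}^n$. Define the matrix $\widehat{P}_{\mathrm{sort}(\mathbf{s})}(\tau)\in\mathbb{R}^{n\times n}$ row by row by $$\widehat{P}_{\mathrm{sort}(\mathbf{s})}[i,:](\tau)=\mathrm{softmax}\Big[\big((n+1-2i)\mathbf{s}-A_{\mathbf{s}}\mathbb{1}\big)/\tau\Big],\qquad i=1,\dots,n,$$ i.e. $\widehat{P}_{\mathrm{sort}(\mathbf{s})}[i,j](\tau)=\dfrac{\exp\big(((n+1-2i)s_j-\sum_{k}|s_j-s_k|)/\tau\big)}{\sum_{l}\exp\big(((n+1-2i)s_l-\sum_{k}|s_l-s_k|)/\tau\big)}$. Then: (1) (Unimodality) If the entries of $\mathbf{s}$ are pairwise distinct, then for every $\tau>0$, $\widehat{P}_{\mathrm{sort}(\mathbf{s})}(\tau)$ is a unimodal row stochastic matrix, and the vector $\mathbf{u}$ with $u_i=\arg\max_j\widehat{P}_{\mathrm{sort}(\mathbf{s})}[i,j](\tau)$ satisfies $\mathbf{u}=\mathrm{sort}(\mathbf{s})$. (2) (Limiting behavior) If the entries of $\mathbf{s}$ are drawn independently from a distribution on $\mathbb{R}$ that is absolutely continuous with respect to Lebesgue measure, then almost surely, for every $i\in\{1,\dots,n\}$, $$\lim_{\tau\to0^+}\widehat{P}_{\mathrm{sort}(\mathbf{s})}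[i,:](\tau)=P_{\mathrm{sort}(\mathbf{s})}[i,:].$$
   Context: For $\mathbf{s}\in\mathbb{R}^n$, $\mathrm{sort}(\mathbf{s})$ is the permutation $\mathbf{z}$ of $\{1,\dots,n\}$ listing indices in order of decreasing value of $s$ ($z_1$ is the index of the largest entry, etc.). The permutation matrix $P_{\mathbf{z}}$ has $P_{\mathbf{z}}[i,j]=1$ iff $j=z_i$ and $0$ otherwise. An $n\times n$ matrix $U$ is unimodal row stochastic if (i) $U[i,j]\ge0$ for all $i,j$; (ii) $\sum_j U[i,j]=1$ for all $i$; (iii) the vector $\mathbf{u}$ with $u_i=\arg\max_j U[i,j]$ (each row having a unique maximizer) is a permutation of $\{1,\dots,n\}$. *)

(* Defs.v *)
From HB Require Import structures.
From mathcomp Require Import all_boot all_order all_algebra.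
From mathcomp Require Import all_classical all_reals all_analysis.
Set Implicit Arguments. Unset Strict Implicit. Unset Printing Implicit Defensive.
Import Order.TTheory GRing.Theory Num.Theory.
Import numFieldNormedType.Exports.
Local Open Scope classical_set_scope.
Local Open Scope ring_scope.

(* Indices {1..n} are represented 0-based by 'I_n. *)

(* sort(s): the list of indices in order of decreasing value of s
   (stable sort; for pairwise distinct entries this is the unique such list). *)
Definition sort_list (R : realType) (n : nat) (s : 'I_n -> R) : seq 'I_n :=
  sort (fun a b => s b <= s a) (enum 'I_n).

(* z_i : the i-th entry of sort(s) (0-based; the default is irrelevant
   since i < n = size (sort_list s)). *)
Definition sort_perm (R : realType) (n : nat) (s : 'I_n -> R) (i : 'I_n) : 'I_n :=
  nth i (sort_list s) i.

Definition perm_matrix_of (R : realType) (n : nat) (z : 'I_n -> 'I_n) : 'M[R]_n :=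
  \matrix_(i, j) (if j == z i then 1 else 0).

Definition As1 (R : realType) (n : nat) (s : 'I_n -> R) (j : 'I_n) : R :=
  \sum_(k < n) `|s j - s k|.

(* The relaxed sorting matrix.  With 0-based row index i (paper's row i+1),
   n + 1 - 2(i+1) = n - 1 - 2 i. *)
Definition Phat (R : realType) (n : nat) (s : 'I_n -> R) (tau : R) : 'M[R]_n :=
  \matrix_(i, j)
    (expR (((n%:R - 1 - 2 * i%:R) * s j - As1 s j) / tau) /
     \sum_(l < n) expR (((n%:R - 1 - 2 * i%:R) * s l - As1 s l) / tau)).

Definition row_unique_argmax (R : realType) (n : nat) (U : 'M[R]_n) (i j : 'I_n) : Prop :=
  forall k, k != j -> U i k < U i j.

Definition unimodal_row_stochastic (R : realType) (n : nat) (U : 'M[R]_n) : Prop :=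
  [/\ (forall i j, 0 <= U i j),
      (forall i, \sum_(j < n) U i j = 1) &
      exists u : 'I_n -> 'I_n,
        (forall i, row_unique_argmax U i (u i)) /\ injective u].

Definition mutually_independent d (T : measurableType d) (R : realType)
  (P : probability T R) (n : nat) (X : 'I_n -> {RV P >-> R}) : Prop :=
  forall B : 'I_n -> set R, (forall i, measurable (B i)) ->
    P (\bigcap_(i in [set: 'I_n]) (X i @^-1` B i))%classic =
    (\prod_(i < n) P (X i @^-1` B i))%E.

(* Main.v *)
Require Import Defs.
From HB Require Import structures.
From mathcomp Require Import all_boot all_order all_algebra.
From mathcomp Require Import all_classical all_reals all_analysis.
From mathcomp Require Import ring lra zify.
Import Order.TTheory GRing.Theory Num.Theory.
Import numFieldNormedType.Exports.
Local Open Scope classical_set_scope.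
Local Open Scope ring_scope.
Section Part1.
Variables (R : realType) (n : nat) (s : 'I_n -> R).
Definition fv (c v : R) := c * v - \sum_(k < n) `|v - s k|.

Lemma cardCn (P : pred 'I_n) : #|[pred q | ~~ P q]| = (n - #|P|)%N.
Proof.
have h := cardC P.
have hP : (#|P| <= n)%N by rewrite -[X in (_ <= X)%N](card_ord n) max_card.
apply/eqP; rewrite -(eqn_add2l #|P|) subnKC //; apply/eqP.
rewrite card_ord in h.
exact: h.
Qed.
Lemma sum_ind (P : pred 'I_n) (a b : R) :
  \sum_(q < n) (if P q then a else b) = a * #|P|%:R + b * (n - #|P|)%:R.
Proof.
rewrite (bigID P) /=.
rewrite (eq_bigr (fun _ => a)); last by move=> q ->.
rewrite [X in _ + X](eq_bigr (fun _ => b)); last by move=> q /negbTE ->.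
rewrite !sumr_const cardCn.
by rewrite !mulr_natr.
Qed.
Lemma keyA (c x y : R) : y < x ->
  (x - y) * (c + 2 * #|[pred q | x <= s q]|%:R - n%:R) <= fv c x - fv c y.
Proof.
move=> yx; set A := #|_|.
have hA : (A <= n)%N by rewrite -[X in (_ <= X)%N](card_ord n) max_card.
have : \sum_(k < n) (`|x - s k| - `|y - s k|) <=
       \sum_(q < n) (if x <= s q then (y - x) else (x - y)).
  apply: ler_sum => q _; case: ifP => h.
    have hy : y <= s q by exact: (ltW (lt_le_trans yx h)).
    rewrite !ler0_norm ?subr_le0 //; lra.
  have := ler_distD y x (s q); rewrite (@gtr0_norm _ (x - y)) ?subr_gt0 //.
  lra.
rewrite sum_ind sumrB /fv -/A natrB // => H.
lra.
Qed.

Lemma keyB (c x y : R) : y < x ->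
  fv c x - fv c y <= (x - y) * (c + n%:R - 2 * #|[pred q | s q <= y]|%:R).
Proof.
move=> yx; set B := #|_|.
have hB : (B <= n)%N by rewrite -[X in (_ <= X)%N](card_ord n) max_card.
have : \sum_(q < n) (if s q <= y then (x - y) else (y - x)) <=
       \sum_(k < n) (`|x - s k| - `|y - s k|).
  apply: ler_sum => q _; case: ifP => h.
    have hx : s q <= x by exact: (ltW (le_lt_trans h yx)).
    rewrite !ger0_norm ?subr_ge0 //; lra.
  have := ler_distD x y (s q); rewrite (distrC y x) (@gtr0_norm _ (x - y)) ?subr_gt0 //.
  lra.
rewrite sum_ind sumrB /fv -/B natrB // => H.
lra.
Qed.


Let L := sort_list s.
Let leT := fun a b : 'I_n => s b <= s a.

Lemma size_L : size L = n.
Proof. by rewrite /L /sort_list size_sort size_enum_ord. Qed.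

Lemma uniq_L : uniq L.
Proof. by rewrite /L /sort_list sort_uniq enum_uniq. Qed.

Lemma sorted_L : sorted leT L.
Proof.
apply: sort_sorted => a b; rewrite /leT; exact: le_total.
Qed.

Lemma leT_tr : transitive leT.
Proof. by move=> b a c; rewrite /leT => h1 h2; exact: le_trans h2 h1. Qed.

Lemma leT_refl : reflexive leT.
Proof. by move=> a; rewrite /leT. Qed.

Lemma cntA (i : 'I_n) : (i.+1 <= #|[pred q | (s (sort_perm s i) <= s q)%R]|)%N.
Proof.
have hi : (i.+1 <= size L)%N by rewrite size_L.
have huniq : uniq (take i.+1 L) by rewrite take_uniq // uniq_L.
have hc : #|take i.+1 L| = i.+1 by rewrite (card_uniqP huniq) size_takel.
rewrite -{1}hc; apply: subset_leq_card. apply/fintype.subsetP => q hq.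
rewrite inE /=.
have hp : (index q (take i.+1 L) < i.+1)%N.
  by rewrite -{2}(size_takel hi) index_mem.
have -> : q = nth i L (index q (take i.+1 L)).
  by rewrite -(nth_take _ hp) nth_index.
rewrite /sort_perm -/L.
have := @sorted_leq_nth _ leT leT_tr leT_refl i L sorted_L (index q (take i.+1 L)) i.
rewrite /leT; apply; rewrite ?inE ?size_L //=. all: have := ltn_ord i; lia.
Qed.

Lemma cntB (i : 'I_n) : (n - i <= #|[pred q | (s q <= s (sort_perm s i))%R]|)%N.
Proof.
have huniq : uniq (drop i L) by rewrite drop_uniq // uniq_L.
have hc : #|drop i L| = (n - i)%N by rewrite (card_uniqP huniq) size_drop size_L.
rewrite -hc; apply: subset_leq_card; apply/fintype.subsetP => q hq.
rewrite inE /=.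
have hp : (index q (drop i L) < n - i)%N.
  by have := size_drop i L; rewrite size_L => <-; rewrite index_mem.
have -> : q = nth i L (i + index q (drop i L))%N.
  by rewrite -nth_drop nth_index.
rewrite /sort_perm -/L.
have := @sorted_leq_nth _ leT leT_tr leT_refl i L sorted_L i (i + index q (drop i L))%N.
rewrite /leT; apply; rewrite ?inE ?size_L //=; have := ltn_ord i; lia.
Qed.

Lemma sort_perm_inj : injective (sort_perm s).
Proof.
move=> i1 i2; rewrite /sort_perm -/L (set_nth_default i1 i2); last by rewrite size_L.
move/eqP; rewrite nth_uniq ?size_L ?uniq_L // => /eqP h; exact: val_inj.
Qed.

Lemma argmax (i k : 'I_n) : injective s -> k != sort_perm s i ->
  fv (n%:R - 1 - 2 * i%:R) (s k) < fv (n%:R - 1 - 2 * i%:R) (s (sort_perm s i)).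
Proof.
move=> sinj hk; set j := sort_perm s i; set c := (n%:R - 1 - 2 * i%:R).
have hs : s k != s j by apply: contra hk => /eqP /sinj ->.
have hA := cntA i; have hB := cntB i.
have hin : (i < n)%N := ltn_ord i.
case: (ltgtP (s k) (s j)) hs => // h _.
- have := @keyA c (s j) (s k) h.
  set A := #|_|.
  have : (i.+1%:R <= A%:R :> R) by rewrite ler_nat.
  rewrite -natr1 /c => hA' H. nra.
- have := @keyB c (s k) (s j) h.
  set B := #|_|.
  have : ((n - i)%:R <= B%:R :> R) by rewrite ler_nat.
  rewrite natrB ?(ltnW hin) // /c => hB' H. nra.
Qed.

Definition ci (i : 'I_n) : R := n%:R - 1 - 2 * i%:R.

Lemma PhatE tau i j : Phat s tau i j =
  expR (fv (ci i) (s j) / tau) / \sum_(l < n) expR (fv (ci i) (s l) / tau).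
Proof. by rewrite mxE. Qed.

Lemma den_gt0 tau (i : 'I_n) (j : 'I_n) (g : 'I_n -> R) :
  0 < \sum_(l < n) expR (g l / tau).
Proof.
rewrite (bigD1 j) //=.
have h1 := expR_gt0 (g j / tau).
have h2 : 0 <= \sum_(l < n | l != j) expR (g l / tau).
  by apply: sumr_ge0 => l _; exact: expR_ge0.
lra.
Qed.

Lemma part1 tau : injective s -> 0 < tau ->
  unimodal_row_stochastic (Phat s tau) /\
  (forall i, row_unique_argmax (Phat s tau) i (sort_perm s i)).
Proof.
move=> sinj tau0.
have amax : forall i, row_unique_argmax (Phat s tau) i (sort_perm s i).
  move=> i k hk; rewrite !PhatE.
  rewrite ltr_pM2r; last by rewrite invr_gt0; exact: (den_gt0 _ i).
  rewrite ltr_expR ltr_pM2r ?invr_gt0 //; exact: argmax.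
split => //; split.
- move=> i j; rewrite PhatE; apply: divr_ge0; first exact: expR_ge0.
  exact: ltW (den_gt0 _ i j _).
- move=> i; under eq_bigr do rewrite PhatE.
  rewrite -mulr_suml divff //; exact: lt0r_neq0 (den_gt0 _ i i _).
- exists (sort_perm s); split => //; exact: sort_perm_inj.
Qed.

End Part1.

Lemma cvg_sum_seq (T : Type) (F : set_system T) (FF : Filter F) (R : realType)
  (J : Type) (r : seq J) (g : J -> T -> R) (l : J -> R) :
  (forall j, g j x @[x --> F] --> l j) ->
  \sum_(j <- r) g j x @[x --> F] --> \sum_(j <- r) l j.
Proof.
move=> hg; elim: r => [|a r IH].
  rewrite big_nil; under eq_fun do rewrite big_nil; exact: cvg_cst.
rewrite big_cons; under eq_fun do rewrite big_cons.
exact: cvgD.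
Qed.

Lemma expR_lim0 (R : realType) (c : R) : c < 0 ->
  expR (c / tau) @[tau --> (0:R)^'+] --> 0.
Proof.
move=> c0.
apply: (@squeeze_cvgr _ _ _ _ (fun _ => 0) (fun tau => tau * (- c)^-1)).
- near=> tau.
  have tau0 : 0 < tau by near: tau; exact: nbhs_right_gt.
  rewrite expR_ge0 /=.
  have hx : 0 < - c / tau by rewrite divr_gt0 // oppr_gt0.
  have h1 := expR_ge1Dx (- c / tau).
  have h2 : - c / tau <= expR (- c / tau) by lra.
  rewrite -[c / tau]opprK -mulNr expRN.
  have -> : tau * (- c)^-1 = (- c / tau)^-1 by rewrite invf_div.
  by rewrite lef_pV2 // posrE expR_gt0.
- exact: cvg_cst.
- apply: cvg_at_right_filter.
  rewrite -[X in _ --> X](mul0r (- c)^-1).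
  apply: cvgMl; exact: cvg_id.
Unshelve. all: by end_near.
Qed.

Lemma lim_Phat (R : realType) (n : nat) (s : 'I_n -> R) : injective s ->
  forall i j : 'I_n, Phat s tau i j @[tau --> (0:R)^'+] -->
            perm_matrix_of R (sort_perm s) i j.
Proof.
move=> sinj i j.
set js := sort_perm s i.
set f := fun l => @fv R n s (@ci R n i) (s l).
have eqP' : forall tau, Phat s tau i j =
    expR ((f j - f js) / tau) / \sum_(l < n) expR ((f l - f js) / tau).
  move=> tau; rewrite PhatE.
  have E : forall l, expR (@fv R n s (@ci R n i) (s l) / tau) =
                     expR ((f l - f js) / tau) * expR (f js / tau).
    by move=> l; rewrite -expRD -mulrDl subrK.
  rewrite (E j); under eq_bigr do rewrite E.
  rewrite -mulr_suml invfM mulrACA mulfV ?mulr1 //; exact: lt0r_neq0 (expR_gt0 _).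
under eq_fun do rewrite eqP'.
have hl : forall l, expR ((f l - f js) / tau) @[tau --> (0:R)^'+] -->
                    (if l == js then 1 else 0 : R).
  move=> l; case: eqP => [->|/eqP hne].
    under eq_fun do rewrite subrr mul0r expR0; exact: cvg_cst.
  apply: expR_lim0; rewrite subr_lt0; exact: argmax.
have hsum : \sum_(l < n) (if l == js then 1 else 0 : R) = 1.
  by rewrite (bigD1 js) //= eqxx big1 ?addr0 // => l /negbTE ->.
rewrite mxE.
have -> : (if j == js then 1 else 0 : R) =
          (if j == js then 1 else 0) * (\sum_(l < n) (if l == js then 1 else 0 : R))^-1.
  by rewrite hsum invr1 mulr1.
apply: cvgM; first exact: hl.
apply: cvgV; first by rewrite hsum oner_neq0.
exact: cvg_sum_seq.
Qed.
Section CDF.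
Variables (d : measure_display) (T : measurableType d) (R : realType)
  (P : probability T R) (Y : {RV P >-> R}).

Local Notation mu := (distribution P Y).
Definition Phi (x : R) : R := fine (mu `]-oo, x]).

Lemma PhiE x : mu `]-oo, x] = (Phi x)%:E.
Proof. by rewrite /Phi fineK // fin_num_measure. Qed.

Lemma Phi_oc x y : x <= y -> mu `]x, y] = (Phi y - Phi x)%:E.
Proof.
move=> xy.
have -> : `]x, y]%classic = `]-oo, y] `\` `]-oo, x].
  apply/seteqP; split => z /=; rewrite !in_itv /= ?andbT.
    by move=> /andP[xz zy]; split => //; apply/negP; rewrite -ltNge.
  by move=> [zy /negP]; rewrite -ltNge => xz; rewrite xz zy.
rewrite measureD //; last by rewrite ltey_eq fin_num_measure.
have -> : `]-oo, y] `&` `]-oo, x] = `]-oo, x]%classic.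
  apply/seteqP; split => z /=; first by case.
  move=> zx; split => //; move: zx; rewrite /= !in_itv /= => zx; exact: le_trans zx xy.
change (mu `]-oo, y] - mu `]-oo, x] = (Phi y - Phi x)%:E)%E.
by rewrite !PhiE EFinB.
Qed.

Lemma Phi_nd x y : x <= y -> Phi x <= Phi y.
Proof.
move=> xy; have := Phi_oc x y xy; have h : (0 <= mu `]x, y])%E by exact: measure_ge0.
move=> E; rewrite E lee_fin in h; lra.
Qed.

Lemma Phi_cont : (forall x, mu [set x] = 0%E) -> continuous Phi.
Proof.
move=> na x0; have [x ->] : exists x : R, x0 = x by exists x0.
pose G k := `]x - (k.+1%:R : R)^-1, x + (k.+1%:R : R)^-1]%classic.
have Gpos : forall k : nat, 0 < (k.+1%:R : R)^-1 by move=> k; rewrite invr_gt0 ltr0Sn.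
have hcap : \bigcap_k G k = [set x].
  apply/seteqP; split => z; last first.
    move=> /= ->{z} k _; rewrite /G /= in_itv /=.
    have e0 := Gpos k; set e := (k.+1%:R^-1) in e0 *. apply/andP; split; lra.
  move=> hz /=; case: (eqVneq z x) => // hne; exfalso.
  set r := `|z - x|.
  have r0 : 0 < r by rewrite normr_gt0 subr_eq0.
  set k := Num.truncn r^-1.
  set N : R := k.+1%:R.
  have N0 : 0 < N by rewrite ltr0Sn.
  have h1 : 1 < r * N.
    by rewrite -(mulfV (lt0r_neq0 r0)) ltr_pM2l // truncnS_gt.
  have := hz k I; rewrite /G /= in_itv /= => /andP[h2 h3].
  set e := (k.+1%:R^-1) in h2 h3.
  have h4 : r <= e by rewrite /r ler_norml; apply/andP; split; lra.
  have : r * N <= e * N by rewrite ler_pM2r.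
  have -> : e * N = N^-1 * N by [].
  rewrite mulVf ?(lt0r_neq0 N0); lra.
have hcvg : (mu \o G) k @[k --> \oo] --> 0%E.
  rewrite -(na x) -hcap.
  apply: nonincreasing_cvg_mu.
  - by rewrite (le_lt_trans (probability_le1 _ _)) ?ltry //; exact: measurable_itv.
  - by move=> k; exact: measurable_itv.
  - by rewrite hcap; exact: measurable_set1.
  - move=> p q pq; apply/subsetPset => z /=; rewrite /G /= !in_itv /= => /andP[h1 h2].
    have hpq : (q.+1%:R : R)^-1 <= (p.+1%:R)^-1.
      by rewrite lef_pV2 ?posrE ?ltr0Sn // ler_nat ltnS.
    set a := (q.+1%:R^-1) in h1 h2 hpq; set b := (p.+1%:R^-1) in hpq *.
    apply/andP; split; lra.
apply/cvgrPdist_lt => e e0.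
have [_ hf] := (fine_cvgP _ 0).1 hcvg.
have [k hk] := filter_ex (cvgr_lt _ hf _ e0).
apply/nbhs_normP; exists (k.+1%:R^-1) => /=; first exact: Gpos.
move=> y; rewrite /ball_ /= => hy.
set ek := (k.+1%:R^-1) in hy.
have fG : mu (G k) = (fine (mu (G k)))%:E.
  by rewrite fineK //; apply: fin_num_measure; exact: measurable_itv.
have hk' : fine (mu (G k)) < e := hk.
move: hy; rewrite ltr_norml => /andP[hy1 hy2].
case: (leP x y) => hxy.
- have hsub : `]x, y] `<=` G k.
    by move=> z /=; rewrite /G /= !in_itv /= => /andP[h1 h2]; rewrite -/ek; apply/andP; split; lra.
  have : (mu `]x, y] <= mu (G k))%E.
    by apply: le_measure => //; rewrite inE; exact: measurable_itv.
  rewrite Phi_oc // fG lee_fin => h.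
  have h' := Phi_nd x y hxy.
  rewrite ler0_norm; lra.
- have hsub : `]y, x] `<=` G k.
    by move=> z /=; rewrite /G /= !in_itv /= => /andP[h1 h2]; rewrite -/ek; apply/andP; split; lra.
  have : (mu `]y, x] <= mu (G k))%E.
    by apply: le_measure => //; rewrite inE; exact: measurable_itv.
  rewrite Phi_oc ?(ltW hxy) // fG lee_fin => h.
  have h' := Phi_nd y x (ltW hxy).
  rewrite ger0_norm; lra.
Qed.

Lemma Phi_ivt : (forall x, mu [set x] = 0%E) -> forall v, 0 < v < 1 -> exists x, Phi x = v.
Proof.
move=> na v /andP[v0 v1].
have [_ hN] := (fine_cvgP _ 0).1 (cvg_cdfNy0 Y).
have [a ha] := filter_ex (cvgr_lt _ hN _ v0).
have [_ hP] := (fine_cvgP _ 1).1 (cvg_cdfy1 Y).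
have [b hb] := filter_ex (cvgr_gt _ hP _ v1).
have ha' : Phi a < v := ha.
have hb' : v < Phi b := hb.
have ab : a <= b.
  case: (leP a b) => // ba; have := Phi_nd b a (ltW ba); lra.
have hab := Phi_nd a b ab.
have hmm : Num.min (Phi a) (Phi b) <= v <= Num.max (Phi a) (Phi b).
  by rewrite (min_idPl hab) (max_idPr hab); apply/andP; split; lra.
have [c _ hc] := IVT ab (continuous_subspaceT (Phi_cont na)) hmm.
by exists c.
Qed.

Lemma partition_mu : (forall x, mu [set x] = 0%E) -> forall K : nat, (0 < K)%N ->
  exists J : nat -> set R,
  [/\ forall m, measurable (J m),
      forall m, (m < K)%N -> mu (J m) = ((K%:R)^-1)%:E &
      forall v, exists2 m, (m < K)%N & J m v].
Proof.
move=> na K K0.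
have K0' : (0 < K%:R :> R) by rewrite ltr0n.
have hx : forall m : nat, exists x : R, (0 < m < K)%N -> Phi x = m%:R / K%:R.
  move=> m; case: (boolP (0 < m < K)%N) => hm; last by exists 0.
  have [|x hx] := @Phi_ivt na (m%:R / K%:R).
    case/andP: hm => m0 mK.
    apply/andP; split; first by rewrite divr_gt0 // ltr0n.
    by rewrite ltr_pdivrMr // mul1r ltr_nat.
  by exists x.
have [x hxP] := choice hx.
pose hb m v := (m != 0)%N && ((K <= m)%N || (v <= x m)).
pose H m := [set v | hb m v].
have Hcase : forall m, H m = if m == 0%N then set0 else if (K <= m)%N then setT
                            else `]-oo, x m]%classic.
  move=> m; apply/seteqP; split => v; rewrite /H /hb /=;
    case: eqP => //= _; case: (K <= m)%N => //=; rewrite in_itv /= andbT //.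
have Hmeas : forall m, measurable (H m).
  move=> m; rewrite Hcase; case: eqP => _ //; case: (K <= m)%N => //; exact: measurable_itv.
have muH : forall m, (m <= K)%N -> mu (H m) = (m%:R / K%:R)%:E.
  move=> m hm; rewrite Hcase; case: eqP => [->|/eqP m0].
    by rewrite measure0 mul0r.
  case: (ltnP m K) => mK.
    by rewrite PhiE hxP // lt0n m0 mK.
  have -> : m = K by apply/eqP; rewrite eqn_leq hm mK.
  by rewrite probability_setT divff // lt0r_neq0.
have Hsub : forall m, (m < K)%N -> H m `<=` H m.+1.
  move=> m mK v; rewrite /H /hb /= => /andP[m0 /orP[Km|vx]].
    by exfalso; move: Km; rewrite leqNgt mK.
  case: (leqP K m.+1) => //= Km1.
  have hm1 := hxP m.+1; have hm := hxP m.
  have e1 : Phi (x m.+1) = m.+1%:R / K%:R by apply: hm1; lia.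
  have e0 : Phi (x m) = m%:R / K%:R by apply: hm; lia.
  have lt : m%:R / K%:R < m.+1%:R / K%:R :> R by rewrite ltr_pM2r ?invr_gt0 // ltr_nat.
  case: (leP (x m) (x m.+1)) => hxx; first exact: le_trans vx hxx.
  have := Phi_nd _ _ (ltW hxx); lra.
exists (fun m => H m.+1 `\` H m); split.
- move=> m; exact: measurableD.
- move=> m mK.
  rewrite measureD //; last by rewrite ltey_eq fin_num_measure.
  have -> : H m.+1 `&` H m = H m.
    apply/seteqP; split => v; first by case.
    by move=> hv; split => //; exact: Hsub.
  change (mu (H m.+1) - mu (H m) = ((K%:R)^-1)%:E)%E.
  rewrite !muH //; last exact: ltnW.
  by rewrite -EFinB -mulrBl -natrB // subSnn mul1r.
- move=> v.
  have hK : exists j, hb j v by exists K; rewrite /hb leqnn /= andbT -lt0n.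
  case: (ex_minnP hK) => m0 hm0 hmin.
  have m00 : m0 != 0%N by case/andP: hm0.
  have m0K : (m0 <= K)%N by apply: hmin; rewrite /hb leqnn /= andbT; lia.
  exists m0.-1; first lia.
  rewrite prednK ?lt0n //; split => //.
  move=> /hmin; lia.
Qed.

End CDF.

Section Tie.
Variables (d : measure_display) (T : measurableType d) (R : realType)
  (P : probability T R) (n : nat) (X : 'I_n -> {RV P >-> R}).

Lemma indep2 : mutually_independent X -> forall a b : 'I_n, a != b ->
  forall A B : set R, measurable A -> measurable B ->
  P (X a @^-1` A `&` X b @^-1` B) = (P (X a @^-1` A) * P (X b @^-1` B))%E.
Proof.
move=> hind a b ab A B mA mB.
pose Bf i := if i == a then A else if i == b then B else setT.
have mBf : forall i, measurable (Bf i).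
  by move=> i; rewrite /Bf; case: eqP => _ //; case: eqP.
have := hind Bf mBf.
have -> : \bigcap_(i in [set: 'I_n]) X i @^-1` Bf i = X a @^-1` A `&` X b @^-1` B.
  apply/seteqP; split => t.
  - move=> h; split.
      by have := h a I; rewrite /Bf /= eqxx.
    by have := h b I; rewrite /Bf /= eq_sym (negbTE ab) eqxx.
  - move=> [ha hb] i _; rewrite /Bf /=; case: eqP => [->//|_]; case: eqP => [->//|_] //.
move=> ->.
rewrite (bigD1 a) //= (bigD1 b) 1?eq_sym //=.
rewrite [X in (_ * (_ * X))%E](_ : _ = 1%E).
  by rewrite mule1 /Bf eqxx eq_sym (negbTE ab) eqxx.
apply: big1 => i /andP[ia ib]; rewrite /Bf (negbTE ia) (negbTE ib) preimage_setT.
exact: probability_setT.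
Qed.

Lemma no_atom (a : 'I_n) : distribution P (X a) `<< (@lebesgue_measure R) ->
  forall x : R, distribution P (X a) [set x] = 0%E.
Proof.
move=> hac x.
apply: (hac [set x]) => //.
move=> A mA Ax; apply/le_anti; rewrite measure_ge0 andbT.
rewrite -(lebesgue_measure_set1 x); apply: le_measure => //; rewrite inE //.
Qed.

Lemma tie_null : mutually_independent X ->
  (forall i j, distribution P (X i) = distribution P (X j)) ->
  (forall i, distribution P (X i) `<< (@lebesgue_measure R)) ->
  forall a b : 'I_n, a != b -> P [set t | X a t = X b t] = 0%E.
Proof.
move=> hind hid hac a b ab.
set D := [set t | X a t = X b t].
have mD : measurable D.
  have hm : measurable_fun setT (X a \- X b).
    exact: measurable_realfun.measurable_funB.
  have := hm measurableT [set 0] (measurable_set1 0).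
  rewrite setTI; congr measurable; apply/seteqP; split => t /=.
    by move=> /eqP; rewrite subr_eq0 => /eqP.
  by move=> ->; rewrite subrr.
have na := no_atom a (hac a).
have bound : forall K : nat, (0 < K)%N -> (P D <= ((K%:R)^-1)%:E)%E.
  move=> K K0.
  have [J [mJ muJ cov]] := @partition_mu _ _ _ P (X a) na K K0.
  pose E m := X a @^-1` J m `&` X b @^-1` J m.
  have mE : forall m, measurable (E m).
    by move=> m; apply: measurableI; exact: measurable_funPTI.
  have sub : D `<=` \big[setU/set0]_(m < K) E m.
    move=> t Dt; rewrite -bigcup_mkord.
    have [m mK Jm] := cov (X a t).
    exists m => //; split => //; rewrite /= -Dt //.
  apply: (@le_trans _ _ (P (\big[setU/set0]_(m < K) E m))).
    apply: le_measure => //; rewrite inE //.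
    by apply: bigsetU_measurable => m _.
  apply: (le_trans (Boole_inequality _ (fun m _ => mE m))).
  have -> : (\sum_(m < K) P (E m) = \sum_(m < K) ((K%:R)^-1 * (K%:R)^-1)%:E)%E.
    apply: eq_bigr => m _.
    rewrite /E indep2 //; try exact: mJ.
    change (distribution P (X a) (J m) * distribution P (X b) (J m) =
            ((K%:R)^-1 * (K%:R)^-1)%:E)%E.
    by rewrite (hid b a) muJ // EFinM.
  rewrite sumEFin sumr_const card_ord lee_fin -mulrnAr.
  rewrite -[((K%:R)^-1 *+ K)]mulr_natr mulVf ?mulr1 // pnatr_eq0; lia.
apply/le_anti; rewrite measure_ge0 andbT.
have fD : P D = (fine (P D))%:E by rewrite fineK // fin_num_measure.
have r0 : 0 <= fine (P D) by rewrite fine_ge0 // measure_ge0.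
rewrite fD lee_fin; case: (leP (fine (P D)) 0) => // rpos; exfalso.
set r := fine (P D) in r0 rpos fD.
set k := Num.truncn r^-1.
set N : R := k.+1%:R.
have N0 : 0 < N by rewrite ltr0Sn.
have h1 : 1 < r * N.
  by rewrite -(mulfV (lt0r_neq0 rpos)) ltr_pM2l // truncnS_gt.
have := bound k.+1 (ltn0Sn k); rewrite fD lee_fin => h2.
have : r * N <= N^-1 * N by rewrite ler_pM2r.
rewrite mulVf ?(lt0r_neq0 N0); lra.
Qed.

End Tie.

Theorem theorem1 (R : realType) (n : nat) (hn : (1 <= n)%N) :
  (* (1) unimodality *)
  (forall (s : 'I_n -> R), injective s ->
     forall tau : R, 0 < tau ->
       unimodal_row_stochastic (Phat s tau) /\
       (forall i, row_unique_argmax (Phat s tau) i (sort_perm s i)))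
  /\
  (* (2) limiting behaviour, almost surely for i.i.d. absolutely continuous entries *)
  (forall (d : measure_display) (T : measurableType d) (P : probability T R)
          (X : 'I_n -> {RV P >-> R}),
     mutually_independent X ->
     (forall i j, distribution P (X i) = distribution P (X j)) ->
     (forall i, distribution P (X i) `<< (@lebesgue_measure R)) ->
     {ae P, forall t : T,
        forall i j : 'I_n,
          Phat (fun k => X k t) tau i j @[tau --> (0:R)^'+] -->
            perm_matrix_of R (sort_perm (fun k => X k t)) i j}).
Proof.
split.
  by move=> s sinj tau tau0; exact: part1.
move=> d T P X hind hid hac.
have hae : {ae P, forall t : T, forall a b : 'I_n, a != b -> X a t != X b t}.
  apply: filter_forall => a; apply: filter_forall => b.
  case: (eqVneq a b) => [<-|ab].
    by apply: nearW => t; rewrite eqxx.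
  exists [set t | X a t = X b t]; split.
  - have hm : measurable_fun setT (X a \- X b).
      exact: measurable_realfun.measurable_funB.
    have := hm measurableT [set 0] (measurable_set1 0).
    rewrite setTI; congr measurable; apply/seteqP; split => t /=.
      by move=> /eqP; rewrite subr_eq0 => /eqP.
    by move=> ->; rewrite subrr.
  - exact: tie_null.
  - move=> t hnot; rewrite /=; case: (eqVneq (X a t) (X b t)) => // hne.
    by exfalso; apply: hnot => /= _.
move: hae; apply: filterS => t ht i j.
apply: lim_Phat => a b hab.
case: (eqVneq a b) => // nab.
by have := ht a b nab; rewrite hab eqxx.
Qed.
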